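(* Let $E$ be a non-trivial locally convex space such that $(E,\sigma(E,E'))$ is a $\sigma$-space. Then: (i) $(E,\sigma(E,E'))$ admits a weaker separable metrizable locally convex topology; (ii) $(E,\sigma(E,E'))$ has countable pseudocharacter and $|E|=\mathfrak c$; (iii) $(E',\sigma(E',E))$ is separable.
   Context: A $\sigma$-space is a regular space having a $\sigma$-locally finite network, where a network is a family $\mathcal N$ of sets such that every open $U$ and $x\in U$ admit $N\in\mathcal N$ with $x\in N\subset U$. Countable pseudocharacter means every point is the intersection of countably many of its open neighbourhoods. *)

(* Defs.v *)
From Stdlib Require Import Reals List.
Open Scope R_scope.

Section Topology.
Variable X : Type.
Variable open : (X -> Prop) -> Prop.

Definition is_topology : Prop :=
  open (fun _ => True) /\
  (forall U V, open U -> open V -> open (fun x => U x /\ V x)) /\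
  (forall F : (X -> Prop) -> Prop, (forall U, F U -> open U) ->
     open (fun x => exists U, F U /\ U x)).

Definition closed (C : X -> Prop) : Prop := open (fun x => ~ C x).

Definition hausdorff : Prop :=
  forall x y, x <> y -> exists U V, open U /\ open V /\ U x /\ V y /\
    (forall z, U z -> V z -> False).

Definition regular : Prop :=
  forall (C : X -> Prop) x, closed C -> ~ C x ->
    exists U V, open U /\ open V /\ U x /\ (forall y, C y -> V y) /\
      (forall z, U z -> V z -> False).

Definition network (N : (X -> Prop) -> Prop) : Prop :=
  forall U x, open U -> U x -> exists A, N A /\ A x /\ (forall y, A y -> U y).

Definition locally_finite (N : (X -> Prop) -> Prop) : Prop :=
  forall x, exists U, open U /\ U x /\
    exists l : list (X -> Prop),
      forall A, N A -> (exists y, U y /\ A y) -> In A l.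

Definition sigma_locally_finite (N : (X -> Prop) -> Prop) : Prop :=
  exists Ns : nat -> (X -> Prop) -> Prop,
    (forall n, locally_finite (Ns n)) /\ (forall A, N A <-> exists n, Ns n A).

Definition sigma_space : Prop :=
  regular /\ exists N, network N /\ sigma_locally_finite N.

Definition countable_pseudocharacter : Prop :=
  forall x, exists Us : nat -> X -> Prop,
    (forall n, open (Us n) /\ Us n x) /\ (forall y, (forall n, Us n y) -> y = x).

(* separable: has a countable dense subset (enumerated by a sequence;
   the spaces considered here are nonempty) *)
Definition separable : Prop :=
  exists d : nat -> X, forall U, open U -> (exists x, U x) -> exists n, U (d n).

Definition is_metric (d : X -> X -> R) : Prop :=
  (forall x y, d x y = 0 <-> x = y) /\ (forall x y, d x y = d y x) /\
  (forall x y z, d x z <= d x y + d y z).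

Definition metrizable : Prop :=
  exists d : X -> X -> R, is_metric d /\
    forall U, open U <-> (forall x, U x -> exists eps, 0 < eps /\
                                  forall y, d x y < eps -> U y).
End Topology.

Definition initial_open (I X : Type) (F : I -> X -> R) (W : X -> Prop) : Prop :=
  forall x, W x -> exists (l : list I) (eps : R), 0 < eps /\
    forall y, (forall i, In i l -> Rabs (F i y - F i x) < eps) -> W y.

Record vspace := VSpace {
  vcar :> Type;
  vzero : vcar;
  vadd : vcar -> vcar -> vcar;
  vopp : vcar -> vcar;
  vscal : R -> vcar -> vcar;
  vaddA : forall x y z, vadd x (vadd y z) = vadd (vadd x y) z;
  vaddC : forall x y, vadd x y = vadd y x;
  vadd0 : forall x, vadd x vzero = x;
  vaddN : forall x, vadd x (vopp x) = vzero;
  vscalA : forall a b x, vscal a (vscal b x) = vscal (a * b) x;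
  vscal1 : forall x, vscal 1 x = x;
  vscalDr : forall a x y, vscal a (vadd x y) = vadd (vscal a x) (vscal a y);
  vscalDl : forall a b x, vscal (a + b) x = vadd (vscal a x) (vscal b x)
}.

Section LCS.
Variable V : vspace.

Definition convex (U : V -> Prop) : Prop :=
  forall x y t, 0 <= t <= 1 -> U x -> U y ->
    U (vadd V (vscal V t x) (vscal V (1 - t) y)).

Definition lc_topology (open : (V -> Prop) -> Prop) : Prop :=
  is_topology V open /\ hausdorff V open /\
  (forall x y W, open W -> W (vadd V x y) ->
     exists U1 U2, open U1 /\ open U2 /\ U1 x /\ U2 y /\
       forall a b, U1 a -> U2 b -> W (vadd V a b)) /\
  (forall r x W, open W -> W (vscal V r x) ->
     exists delta U, 0 < delta /\ open U /\ U x /\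
       forall s y, Rabs (s - r) < delta -> U y -> W (vscal V s y)) /\
  (forall W, open W -> W (vzero V) ->
     exists U, open U /\ U (vzero V) /\ convex U /\ forall y, U y -> W y).

Definition linear (f : V -> R) : Prop :=
  (forall x y, f (vadd V x y) = f x + f y) /\
  (forall a x, f (vscal V a x) = a * f x).

Definition continuous (open : (V -> Prop) -> Prop) (f : V -> R) : Prop :=
  forall x eps, 0 < eps -> exists U, open U /\ U x /\
    forall y, U y -> Rabs (f y - f x) < eps.

Definition dual (open : (V -> Prop) -> Prop) : Type :=
  { f : V -> R | linear f /\ continuous open f }.

Definition weak_open (open : (V -> Prop) -> Prop) : (V -> Prop) -> Prop :=
  initial_open (dual open) V (fun f x => proj1_sig f x).

Definition weakstar_open (open : (V -> Prop) -> Prop) : (dual open -> Prop) -> Prop :=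
  initial_open V (dual open) (fun x f => proj1_sig f x).
End LCS.

(* Main.v *)
Require Import Defs.
From Stdlib Require Import Reals List Lra Lia ZArith Classical ClassicalEpsilon Cantor FunctionalExtensionality.
Open Scope R_scope.

Module Wrap.

From mathcomp Require Import all_boot.
From mathcomp Require Import boolp classical_sets functions cardinality.
From mathcomp Require Import Rstruct Rstruct_topology.

Lemma zorn_pre (T : Type) (t0 : T) (R : T -> T -> Prop) :
  (forall t, R t t) -> (forall r s t, R r s -> R s t -> R r t) ->
  (forall A : T -> Prop, (forall s t, A s -> A t -> R s t \/ R t s) ->
      exists t, forall s, A s -> R s t) ->
  exists t, forall s, R t s -> R s t.
Proof.
move=> Hr Ht Hc.
pose Rb := (fun a b => `[< R a b >]).
have H1 : forall t, Rb t t by move=> t; apply/asboolP.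
have H2 : forall r s t, Rb r s -> Rb s t -> Rb r t.
  by move=> r s t /asboolP H1' /asboolP H2'; apply/asboolP; eauto.
have H3 : forall A : set T, total_on A (fun x y => Rb x y) -> exists t, forall s, A s -> Rb s t.
  move=> A HA; have [t Hu] : exists t, forall s, A s -> R s t.
    by apply: Hc => s t As At; case: (HA s t As At) => /asboolP; auto.
  by exists t => s As; apply/asboolP; auto.
have [t Ht'] := @ZL_preorder T t0 Rb H1 H2 H3.
by exists t => s H; have /asboolP := Ht' s (introT (asboolP _) H).
Qed.

Lemma cb_wrap (T : Type) (f : T -> R) (g : R -> T) :
  (forall x y, f x = f y -> x = y) -> (forall x y, g x = g y -> x = y) ->
  exists h : T -> R, (forall x y, h x = h y -> x = y) /\ (forall r, exists x, h x = r).
Proof.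
move=> fi gi.
have le1 : ([set: T] #<= [set: R])%card.
  have : $|{injfun [set: T] >-> [set: R]}|.
    by apply/injfunPex; exists f => // x y _ _; apply: fi.
  by case=> k; apply: inj_card_le.
have le2 : ([set: R] #<= [set: T])%card.
  have : $|{injfun [set: R] >-> [set: T]}|.
    by apply/injfunPex; exists g => // x y _ _; apply: gi.
  by case=> k; apply: inj_card_le.
have [h [_ hi hs]] := elimT (@card_set_bijP T R _ _) (Cantor_Bernstein le1 le2).
exists h; split; first by move=> x y; apply: hi; rewrite in_setT.
by move=> r; have [x _ <-] := hs r I; exists x.
Qed.

Lemma surj_gen (T : countType) (t0 : T) : exists f : nat -> T, forall t, exists n, f n = t.
Proof.
exists (fun n => odflt t0 (unpickle n)) => t; exists (pickle t); by rewrite pickleK.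
Qed.

Lemma surj_A : exists f : nat -> (nat * list (nat * nat))%type, forall t, exists n, f n = t.
Proof. exact: (@surj_gen _ (0%nat, [::])). Qed.

Lemma surj_B : exists f : nat -> (nat * list (nat * nat * nat))%type, forall t, exists n, f n = t.
Proof. exact: (@surj_gen _ (0%nat, [::])). Qed.

Lemma surj_C : exists f : nat -> (nat * nat * nat)%type, forall t, exists n, f n = t.
Proof. exact: (@surj_gen _ (0%nat, 0%nat, 0%nat)). Qed.

Lemma surj_D : exists f : nat -> (nat * nat)%type, forall t, exists n, f n = t.
Proof. exact: (@surj_gen _ (0%nat, 0%nat)). Qed.
End Wrap.


Section VS.
Variable V : vspace.
Notation "0v" := (vzero V).
Notation "x +v y" := (vadd V x y) (at level 50, left associativity).
Notation "a *v x" := (vscal V a x) (at level 40).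

Lemma vadd0l x : 0v +v x = x.
Proof. rewrite vaddC; apply vadd0. Qed.

Lemma vaddNl x : vopp V x +v x = 0v.
Proof. rewrite vaddC; apply vaddN. Qed.

Lemma vaddKl x y z : x +v y = x +v z -> y = z.
Proof.
intro H. rewrite <- (vadd0l y), <- (vadd0l z), <- (vaddNl x), <- !vaddA, H. reflexivity.
Qed.

Lemma vaddKr x y z : y +v x = z +v x -> y = z.
Proof. rewrite (vaddC _ y x), (vaddC _ z x). apply vaddKl. Qed.

Lemma vscal0 x : 0 *v x = 0v.
Proof.
apply (vaddKl (0 *v x)). rewrite vadd0, <- vscalDl. f_equal; ring.
Qed.

Lemma vscalz a : a *v 0v = 0v.
Proof.
apply (vaddKl (a *v 0v)). rewrite vadd0, <- vscalDr, vadd0. reflexivity.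
Qed.

Lemma vopp_uniq x y : x +v y = 0v -> y = vopp V x.
Proof. intro H. apply (vaddKl x). rewrite H, vaddN. reflexivity. Qed.

Lemma vscalN1 x : (-1) *v x = vopp V x.
Proof.
apply vopp_uniq. rewrite <- (vscal1 _ x) at 1. rewrite <- vscalDl.
replace (1 + -1) with 0 by ring. apply vscal0.
Qed.

Lemma vadd4 a b c d : (a +v b) +v (c +v d) = (a +v c) +v (b +v d).
Proof.
rewrite <- !vaddA. f_equal. rewrite !vaddA. f_equal. apply vaddC.
Qed.

Lemma vscalDl' a b x : a *v x +v b *v x = (a + b) *v x.
Proof. symmetry; apply vscalDl. Qed.

Lemma vsub_eq0 x y : x +v (-1) *v y = 0v -> x = y.
Proof.
intro H.
assert (E : x = x +v ((-1) *v y +v 1 *v y)).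
{ rewrite vscalDl'. replace (-1 + 1) with 0 by ring. rewrite vscal0, vadd0. reflexivity. }
rewrite E, vaddA, H, vadd0l, vscal1. reflexivity.
Qed.

Lemma vscal_inj a x y : a <> 0 -> a *v x = a *v y -> x = y.
Proof.
intros Ha H. apply (f_equal (vscal V (/ a))) in H. rewrite !vscalA in H.
replace (/ a * a) with 1 in H by (field; auto). rewrite !vscal1 in H. exact H.
Qed.

Lemma lin0 f : Defs.linear V f -> f 0v = 0.
Proof.
intros [Ha Hs]. rewrite <- (vscal0 0v), Hs. ring.
Qed.

Lemma linsub f x y : Defs.linear V f -> f (x +v (-1) *v y) = f x - f y.
Proof. intros [Ha Hs]. rewrite Ha, Hs. ring. Qed.

End VS.


Section HB.
Variable E : vspace.
Variable openE : (E -> Prop) -> Prop.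
Hypothesis HE : lc_topology E openE.
Notation "0v" := (vzero E).
Notation "x +v y" := (vadd E x y) (at level 50, left associativity).
Notation "a *v x" := (vscal E a x) (at level 40).

Lemma top_inter U W : openE U -> openE W -> openE (fun x => U x /\ W x).
Proof. destruct HE as [[_ [H _]] _]. apply H. Qed.

Lemma absorb z W : openE W -> W 0v -> exists d, 0 < d /\ forall s, Rabs s < d -> W (s *v z).
Proof.
intros HW W0. destruct HE as [_ [_ [_ [Hs _]]]].
destruct (Hs 0 z W HW) as [d [U [Hd [HU [Uz HH]]]]].
{ rewrite vscal0. exact W0. }
exists d. split; auto. intros s Hs'. apply HH; auto. rewrite Rminus_0_r; auto.
Qed.

Lemma expand W b : openE W -> W b -> exists e, 0 < e /\ W ((1 + e) *v b).
Proof.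
intros HW Wb. destruct HE as [_ [_ [_ [Hs _]]]].
destruct (Hs 1 b W HW) as [d [U [Hd [HU [Ub HH]]]]].
{ rewrite vscal1. exact Wb. }
exists (d/2). split; [lra|]. apply HH; auto.
replace (1 + d/2 - 1) with (d/2) by ring. rewrite Rabs_pos_eq; lra.
Qed.

Variable U : E -> Prop.
Hypothesis HU : openE U.
Hypothesis U0 : U 0v.
Hypothesis Uconv : convex E U.
Variable x0 : E.
Hypothesis nUx0 : ~ U x0.

Definition good (G : E -> R -> Prop) :=
 (forall y1 r1 y2 r2, G y1 r1 -> G y2 r2 -> G (y1 +v y2) (r1 + r2)) /\
 (forall a y r, G y r -> G (a *v y) (a * r)) /\
 (forall r, G 0v r -> r = 0) /\
 G x0 1 /\
 (forall y r, G y r -> U y -> r < 1).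

Record pg := PG { gr : E -> R -> Prop; grP : good gr }.

Definition ple (p q : pg) := forall y r, gr p y r -> gr q y r.

Lemma good_fun G : good G -> forall y r1 r2, G y r1 -> G y r2 -> r1 = r2.
Proof.
intros [Ha [Hs [H0 _]]] y r1 r2 H1 H2.
assert (G (y +v (-1) *v y) (r1 + -1 * r2)) by (apply Ha; auto).
rewrite vscalN1, vaddN in H. apply H0 in H. lra.
Qed.

Lemma good_0 G : good G -> G 0v 0.
Proof.
intros [Ha [Hs [H0 [Hx _]]]]. assert (H := Hs 0 x0 1 Hx). rewrite Rmult_0_l, vscal0 in H. exact H.
Qed.

Definition G0 (y : E) (r : R) := y = r *v x0.

Lemma x0_nz : x0 <> 0v.
Proof. intro H; apply nUx0; rewrite H; auto. Qed.

Lemma good_G0 : good G0.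
Proof.
unfold G0. repeat split.
- intros y1 r1 y2 r2 -> ->. symmetry. apply vscalDl.
- intros a y r ->. apply vscalA.
- intros r H. destruct (Req_dec r 0) as [|Hr]; auto. exfalso. apply x0_nz.
  apply (vscal_inj _ r); auto. rewrite vscalz. auto.
- rewrite vscal1; auto.
- intros y r -> Hy. destruct (Rlt_le_dec r 1) as [|Hr]; auto. exfalso. apply nUx0.
  assert (Hc := Uconv (r *v x0) 0v (/ r) ltac:(split; [apply Rlt_le, Rinv_0_lt_compat; lra|apply Rinv_le_contravar in Hr; lra]) Hy U0).
  rewrite vscalz, vadd0, vscalA, Rinv_l, vscal1 in Hc by lra. exact Hc.
Qed.

Definition p0 := PG G0 good_G0.

Lemma chain_bound (A : pg -> Prop) :
  (forall s t, A s -> A t -> ple s t \/ ple t s) -> exists t, forall s, A s -> ple s t.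
Proof.
intro Hch. destruct (classic (exists p, A p)) as [[p Ap]|Hn].
2:{ exists p0. intros s As. exfalso; eauto. }
set (UG := fun y r => exists q, A q /\ gr q y r).
assert (gUG : good UG).
{ repeat split.
  - intros y1 r1 y2 r2 [q1 [A1 H1]] [q2 [A2 H2]].
    destruct (Hch q1 q2 A1 A2) as [L|L].
    + exists q2; split; auto. apply (proj1 (grP q2)); auto.
    + exists q1; split; auto. apply (proj1 (grP q1)); auto.
  - intros a y r [q [Aq H]]. exists q; split; auto. apply (proj1 (proj2 (grP q))); auto.
  - intros r [q [Aq H]]. apply (proj1 (proj2 (proj2 (grP q)))); auto.
  - exists p; split; auto. apply (grP p).
  - intros y r [q [Aq H]]. apply (proj2 (proj2 (proj2 (proj2 (grP q))))); auto. }
exists (PG UG gUG). intros s As y r H. simpl. exists s; auto.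
Qed.

Section Ext.
Variable p : pg.
Variable z : E.
Hypothesis nz : ~ exists r, gr p z r.

Let G := gr p.
Let gG : good G := grP p.

Definition Alow (c : R) := exists y r s, G y r /\ 0 < s /\ U (y +v (- s) *v z) /\ c = (r - 1) / s.
Definition Bup (c : R) := exists y r t, G y r /\ 0 < t /\ U (y +v t *v z) /\ c = (1 - r) / t.

Lemma real_key r1 r2 s t : 0 < s -> 0 < t ->
  t / (s + t) * r1 + (1 - t / (s + t)) * r2 < 1 -> (r1 - 1) / s < (1 - r2) / t.
Proof.
intros Hs Ht H.
assert (H1 : t * r1 + s * r2 < s + t).
{ replace (1 - t / (s + t)) with (s / (s + t)) in H by (field; lra).
  apply (Rmult_lt_compat_l (s + t)) in H; [|lra].
  replace ((s + t) * (t / (s + t) * r1 + s / (s + t) * r2)) with (t * r1 + s * r2) in H by (field; lra).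
  lra. }
apply (Rmult_lt_reg_l (s * t)); [nra|].
replace (s * t * ((r1 - 1) / s)) with (t * (r1 - 1)) by (field; lra).
replace (s * t * ((1 - r2) / t)) with (s * (1 - r2)) by (field; lra).
lra.
Qed.

Lemma AB a b : Alow a -> Bup b -> a < b.
Proof.
intros [y1 [r1 [s [G1 [Hs [U1 ->]]]]]] [y2 [r2 [t [G2 [Ht [U2 ->]]]]]].
set (l := t / (s + t)).
assert (Hl : 0 <= l <= 1).
{ unfold l. split. apply Rlt_le, Rdiv_lt_0_compat; lra.
  apply (Rmult_le_reg_l (s + t)); [lra|]. unfold Rdiv. rewrite <- Rmult_assoc, (Rmult_comm _ t), Rmult_assoc, Rinv_r; lra. }
assert (Hc := Uconv _ _ l Hl U1 U2).
rewrite !vscalDr, !vscalA, vadd4, vscalDl' in Hc.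
replace (l * - s + (1 - l) * t) with 0 in Hc by (unfold l; field; lra).
rewrite vscal0, vadd0 in Hc.
destruct gG as [Ha [Hsc [_ [_ HUc]]]].
assert (Hg := HUc _ _ (Ha _ _ _ _ (Hsc l _ _ G1) (Hsc (1 - l) _ _ G2)) Hc).
apply real_key; auto.
Qed.

Lemma A_strict a : Alow a -> exists a', Alow a' /\ a < a'.
Proof.
intros [y [r [s [Gy [Hs [Uy ->]]]]]].
destruct (expand _ _ HU Uy) as [e [He Ue]].
exists (((1 + e) * r - 1) / ((1 + e) * s)). split.
- exists ((1 + e) *v y), ((1 + e) * r), ((1 + e) * s). repeat split.
  + apply (proj1 (proj2 gG)); auto.
  + nra.
  + rewrite vscalDr, vscalA in Ue. replace ((1 + e) * - s) with (- ((1 + e) * s)) in Ue by ring. exact Ue.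
- apply (Rmult_lt_reg_l ((1 + e) * s)); [nra|].
  replace ((1 + e) * s * ((r - 1) / s)) with ((1 + e) * (r - 1)) by (field; lra).
  replace ((1 + e) * s * (((1 + e) * r - 1) / ((1 + e) * s))) with ((1 + e) * r - 1) by (field; nra).
  lra.
Qed.

Lemma B_strict b : Bup b -> exists b', Bup b' /\ b' < b.
Proof.
intros [y [r [t [Gy [Ht [Uy ->]]]]]].
destruct (expand _ _ HU Uy) as [e [He Ue]].
exists ((1 - (1 + e) * r) / ((1 + e) * t)). split.
- exists ((1 + e) *v y), ((1 + e) * r), ((1 + e) * t). repeat split.
  + apply (proj1 (proj2 gG)); auto.
  + nra.
  + rewrite vscalDr, vscalA in Ue. exact Ue.
- apply (Rmult_lt_reg_l ((1 + e) * t)); [nra|].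
  replace ((1 + e) * t * ((1 - r) / t)) with ((1 + e) * (1 - r)) by (field; lra).
  replace ((1 + e) * t * ((1 - (1 + e) * r) / ((1 + e) * t))) with (1 - (1 + e) * r) by (field; nra).
  lra.
Qed.

Lemma A_ne : exists a, Alow a.
Proof.
destruct (absorb z U HU U0) as [d [Hd Hz]].
exists ((0 - 1) / (d / 2)), 0v, 0, (d / 2). repeat split.
- apply good_0; auto.
- lra.
- rewrite vadd0l. apply Hz. rewrite Rabs_Ropp, Rabs_pos_eq; lra.
Qed.

Lemma B_ne : exists b, Bup b.
Proof.
destruct (absorb z U HU U0) as [d [Hd Hz]].
exists ((1 - 0) / (d / 2)), 0v, 0, (d / 2). repeat split.
- apply good_0; auto.
- lra.
- rewrite vadd0l. apply Hz. rewrite Rabs_pos_eq; lra.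
Qed.

Definition cval : R.
Proof.
refine (proj1_sig (completeness Alow _ A_ne)).
destruct B_ne as [b Hb]. exists b. intros a Ha. left. apply AB; auto.
Defined.

Lemma cval_lub : is_lub Alow cval.
Proof. unfold cval. apply (proj2_sig (completeness _ _ _)). Qed.

Lemma cval_A a : Alow a -> a < cval.
Proof.
intros Ha. destruct (A_strict a Ha) as [a' [Ha' Hlt]].
destruct cval_lub as [Hub _].
specialize (Hub a' Ha'). lra.
Qed.

Lemma cval_B b : Bup b -> cval < b.
Proof.
intros Hb. destruct (B_strict b Hb) as [b' [Hb' Hlt]].
destruct cval_lub as [_ Hlub].
assert (cval <= b'). { apply Hlub. intros a Ha. left. apply AB; auto. }
lra.
Qed.

Definition G' (y : E) (r : R) := exists y1 r1 t, G y1 r1 /\ y = y1 +v t *v z /\ r = r1 + t * cval.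

Lemma good_G' : good G'.
Proof.
destruct gG as [Ha [Hsc [H0 [Hx HUc]]]].
repeat split.
- intros y1 r1 y2 r2 [u1 [s1 [t1 [G1 [-> ->]]]]] [u2 [s2 [t2 [G2 [-> ->]]]]].
  exists (u1 +v u2), (s1 + s2), (t1 + t2). repeat split; auto.
  + rewrite vadd4, vscalDl'. reflexivity.
  + ring.
- intros a y r [u [s [t [G1 [-> ->]]]]].
  exists (a *v u), (a * s), (a * t). repeat split; auto.
  + rewrite vscalDr, vscalA. reflexivity.
  + ring.
- intros r [u [s [t [G1 [Hy ->]]]]].
  destruct (Req_dec t 0) as [Ht|Ht].
  + subst t. rewrite vscal0, vadd0 in Hy. subst u. rewrite (H0 s G1). ring.
  + exfalso. apply nz. exists ((-1 / t) * s).
    assert (Hz : z = (-1 / t) *v u).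
    { apply (vscal_inj _ t); auto. rewrite vscalA. replace (t * (-1 / t)) with (-1) by (field; auto).
      rewrite vscalN1. apply vopp_uniq. auto. }
    rewrite Hz. apply Hsc; auto.
- exists x0, 1, 0. repeat split; auto.
  + rewrite vscal0, vadd0; auto.
  + ring.
- intros y r [u [s [t [G1 [Hy1 Hr1]]]]] Hy; subst y r.
  destruct (Rtotal_order t 0) as [Ht|[Ht|Ht]].
  + assert (HA : Alow ((s - 1) / (- t))).
    { exists u, s, (- t). repeat split; auto. lra. rewrite Ropp_involutive; auto. }
    apply cval_A in HA.
    apply (Rmult_lt_compat_l (- t)) in HA; [|lra].
    replace (- t * ((s - 1) / - t)) with (s - 1) in HA by (field; lra). lra.
  + subst t. rewrite vscal0, vadd0 in Hy. rewrite Rmult_0_l, Rplus_0_r. apply HUc with u; auto.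
  + assert (HB : Bup ((1 - s) / t)).
    { exists u, s, t. repeat split; auto. }
    apply cval_B in HB.
    apply (Rmult_lt_compat_l t) in HB; [|lra].
    replace (t * ((1 - s) / t)) with (1 - s) in HB by (field; lra). lra.
Qed.

Lemma ext_contra : ~ ple (PG G' good_G') p.
Proof.
intro H. apply nz. exists (0 + 1 * cval). apply H. simpl.
exists 0v, 0, 1. repeat split; auto.
- apply good_0; auto.
- rewrite vscal1, vadd0l; auto.
Qed.

Lemma ple_ext : ple p (PG G' good_G').
Proof.
intros y r Hy. simpl. exists y, r, 0. repeat split; auto.
- rewrite vscal0, vadd0; auto.
- ring.
Qed.

End Ext.

Lemma exists_total : exists p : pg, forall y, exists r, gr p y r.
Proof.
assert (Hz : exists t, forall s, ple t s -> ple s t).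
{ apply (Wrap.zorn_pre _ p0 ple).
  - intros t y r; auto.
  - intros r s t H1 H2 y v H; auto.
  - intros A HA. apply chain_bound; auto. }
destruct Hz as [p Hp]. exists p. intro y.
apply NNPP. intro Hn. apply (ext_contra p y Hn). apply Hp. apply ple_ext.
Qed.

End HB.

Section HB2.
Variable E : vspace.
Variable openE : (E -> Prop) -> Prop.
Hypothesis HE : lc_topology E openE.
Notation "0v" := (vzero E).
Notation "x +v y" := (vadd E x y) (at level 50, left associativity).
Notation "a *v x" := (vscal E a x) (at level 40).

Lemma cont_crit f : Defs.linear E f ->
  (exists O, openE O /\ O 0v /\ forall y, O y -> Rabs (f y) < 1) -> Defs.continuous E openE f.
Proof.
intros Hf [O [HO [O0 Hb]]] x eps Heps.
destruct HE as [_ [_ [Ha [Hs _]]]].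
destruct (Hs (/ eps) 0v O HO) as [d [U1 [Hd [HU1 [U10 H1]]]]].
{ rewrite vscalz; auto. }
destruct (Ha x ((-1) *v x) U1 HU1) as [U2 [U3 [HU2 [HU3 [U2x [U3x H23]]]]]].
{ rewrite vscalN1, vaddN; auto. }
exists U2. repeat split; auto. intros y Hy.
assert (Hc := Hb _ (H1 (/ eps) _ ltac:(rewrite Rminus_diag, Rabs_R0; auto) (H23 _ _ Hy U3x))).
destruct Hf as [Hfa Hfs]. rewrite Hfs, Hfa, Hfs in Hc.
rewrite Rabs_mult, Rabs_inv, (Rabs_pos_eq eps) in Hc by lra.
apply (Rmult_lt_compat_l eps) in Hc; [|lra].
rewrite <- Rmult_assoc, Rinv_r, Rmult_1_l, Rmult_1_r in Hc by lra.
replace (f y - f x) with (f y + -1 * f x) by ring. exact Hc.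
Qed.

Lemma HB_sep x0 : x0 <> 0v -> exists f : dual E openE, proj1_sig f x0 <> 0.
Proof.
intro Hx0.
destruct HE as [Htop [Hh [Ha [Hs Hcv]]]].
destruct (Hh x0 0v Hx0) as [P [Q [HP [HQ [Px0 [Q0 PQ]]]]]].
destruct (Hcv Q HQ Q0) as [U [HU [U0 [Uc UQ]]]].
assert (nU : ~ U x0) by (intro H; apply (PQ x0); auto).
destruct (exists_total E openE HE U HU U0 Uc x0 nU) as [p Hp].
set (f := fun y => proj1_sig (constructive_indefinite_description _ (Hp y))).
assert (Hfg : forall y, gr _ _ _ p y (f y)).
{ intro y. unfold f. apply (proj2_sig (constructive_indefinite_description _ _)). }
destruct (grP _ _ _ p) as [Gadd [Gsc [G0 [Gx GU]]]].
assert (Hfun := good_fun _ _ _ _ (grP _ _ _ p)).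
assert (Hlin : Defs.linear E f).
{ split.
  - intros x y. apply (Hfun (x +v y)); auto.
  - intros a x. apply (Hfun (a *v x)); auto. }
assert (Hf1 : f x0 = 1) by (apply (Hfun x0); auto).
assert (Hcont : Defs.continuous E openE f).
{ apply cont_crit; auto.
  destruct (Hs (-1) 0v U HU) as [d [U' [Hd [HU' [U'0 HU'1]]]]].
  { rewrite vscalz; auto. }
  exists (fun y => U y /\ U' y). repeat split; auto.
  - apply Htop; auto.
  - intros y [Uy U'y]. apply Rabs_def1.
    + apply (GU y); auto.
    + assert (H := GU _ _ (Hfg ((-1) *v y)) (HU'1 (-1) y ltac:(rewrite Rminus_diag, Rabs_R0; auto) U'y)).
      destruct Hlin as [_ Hls]. rewrite Hls in H. lra. }
exists (exist _ f (conj Hlin Hcont)). simpl. lra.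
Qed.

End HB2.


Section WeakOpen.
Variable I X : Type.
Variable F : I -> X -> R.
Notation W := (initial_open I X F).

Lemma iopen_inter S1 S2 : W S1 -> W S2 -> W (fun x => S1 x /\ S2 x).
Proof.
intros H1 H2 x [x1 x2].
destruct (H1 x x1) as [l1 [e1 [He1 K1]]].
destruct (H2 x x2) as [l2 [e2 [He2 K2]]].
exists (l1 ++ l2), (Rmin e1 e2). split; [apply Rmin_pos; auto|].
intros y Hy. split.
- apply K1. intros i Hi. eapply Rlt_le_trans; [apply Hy; apply in_or_app; auto|apply Rmin_l].
- apply K2. intros i Hi. eapply Rlt_le_trans; [apply Hy; apply in_or_app; auto|apply Rmin_r].
Qed.

Lemma iopen_ball i c r : W (fun x => Rabs (F i x - c) < r).
Proof.
intros x Hx. exists (i :: nil), (r - Rabs (F i x - c)). split; [lra|].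
intros y Hy. specialize (Hy i (or_introl eq_refl)).
replace (F i y - c) with ((F i y - F i x) + (F i x - c)) by ring.
eapply Rle_lt_trans; [apply Rabs_triang|]. lra.
Qed.

Lemma iopen_full : W (fun _ => True).
Proof. intros x _. exists nil, 1. split; [lra|]. auto. Qed.

Lemma iopen_union (Fm : (X -> Prop) -> Prop) : (forall U, Fm U -> W U) ->
  W (fun x => exists U, Fm U /\ U x).
Proof.
intros H x [U [FU Ux]]. destruct (H U FU x Ux) as [l [e [He K]]].
exists l, e. split; auto. intros y Hy. exists U. split; auto.
Qed.

Lemma iopen_top : is_topology X W.
Proof.
split; [apply iopen_full|]. split.
- apply iopen_inter.
- apply iopen_union.
Qed.

Lemma iopen_box (l : list I) (x : X) (r : R) : W (fun y => forall i, In i l -> Rabs (F i y - F i x) < r).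
Proof.
induction l as [|a l IH].
- intros y _. exists nil, 1. split; [lra|]. intros z _ i [].
- assert (H := iopen_inter _ _ (iopen_ball a (F a x) r) IH).
  intros y Hy. destruct (H y (conj (Hy a (or_introl eq_refl)) (fun i Hi => Hy i (or_intror Hi)))) as [l' [e [He K]]].
  exists l', e. split; auto. intros z Hz i [<-|Hi]; [apply (proj1 (K z Hz))|apply (proj2 (K z Hz)); auto].
Qed.

End WeakOpen.

Section Pseudo.
Variable E : vspace.
Variable openE : (E -> Prop) -> Prop.
Hypothesis HE : lc_topology E openE.
Hypothesis Hsig : sigma_space E (weak_open E openE).
Notation "0v" := (vzero E).
Notation "x +v y" := (vadd E x y) (at level 50, left associativity).
Notation "a *v x" := (vscal E a x) (at level 40).
Notation W := (weak_open E openE).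

Lemma weak_T1 x y : x <> y -> exists O, W O /\ O y /\ ~ O x.
Proof.
intro Hxy.
assert (Hnz : y +v (-1) *v x <> 0v).
{ intro H. apply Hxy. symmetry. apply vsub_eq0. auto. }
destruct (HB_sep E openE HE _ Hnz) as [f Hf].
assert (Hfl := proj1 (proj2_sig f)).
rewrite linsub in Hf by auto.
exists (fun z => Rabs (proj1_sig f z - proj1_sig f y) < Rabs (proj1_sig f y - proj1_sig f x)).
repeat split.
- apply (iopen_ball _ _ (fun f x => proj1_sig f x)).
- rewrite Rminus_diag, Rabs_R0. apply Rabs_pos_lt. auto.
- rewrite <- Rabs_Ropp. replace (- (proj1_sig f x - proj1_sig f y)) with (proj1_sig f y - proj1_sig f x) by ring. lra.
Qed.

Definition cl (A : E -> Prop) (z : E) := forall O, W O -> O z -> exists w, O w /\ A w.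

Lemma pseudo x : exists On : nat -> E -> Prop,
  (forall n, W (On n) /\ On n x) /\ (forall y, (forall n, On n y) -> y = x).
Proof.
destruct Hsig as [Hreg [N [Hnet [Ns [Hlf HN]]]]].
exists (fun n y => forall A, Ns n A -> cl A y -> cl A x).
split.
- intro n. split; [|auto].
  intros y Hy.
  destruct (Hlf n y) as [O [HO [Oy [l Hl]]]].
  assert (Hind : forall ll : list (E -> Prop), exists S, W S /\ S y /\ (forall w, S w -> O w) /\
     forall A, In A ll -> Ns n A -> ~ cl A x -> forall w, S w -> ~ A w).
  { induction ll as [|A0 ll IH].
    - exists O. split; [auto|split; [auto|split; [auto|intros A' []]]].
    - destruct IH as [S [HS [Sy [SO HSA]]]].
      destruct (classic (Ns n A0 /\ ~ cl A0 x)) as [[NA nclA]|Hno].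
      + assert (nclAy : ~ cl A0 y) by (intro H; apply nclA; apply Hy; auto).
        unfold cl in nclAy. apply not_all_ex_not in nclAy. destruct nclAy as [OA HOA].
        apply imply_to_and in HOA. destruct HOA as [HOA1 HOA2].
        apply imply_to_and in HOA2. destruct HOA2 as [OAy HOA3].
        exists (fun w => S w /\ OA w). repeat split; auto.
        * apply (iopen_inter _ _ (fun f x => proj1_sig f x)); auto.
        * intros w [Sw _]; auto.
        * intros B [<-|HB] NB nB w [Sw OAw] Bw.
          -- apply HOA3. exists w; auto.
          -- apply (HSA B HB NB nB w Sw Bw).
      + exists S. repeat split; auto.
        intros B [<-|HB] NB nB w Sw Bw.
        * apply Hno; auto.
        * apply (HSA B HB NB nB w Sw Bw). }
  destruct (Hind l) as [S [HS [Sy [SO HSA]]]].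
  destruct (HS y Sy) as [l' [e [He K]]].
  exists l', e. split; auto. intros z Hz A NA clAz.
  apply NNPP. intro nclA.
  destruct (clAz S HS (K z Hz)) as [w [Sw Aw]].
  assert (In A l) by (apply Hl; auto; exists w; auto).
  apply (HSA A H NA nclA w Sw Aw).
- intros y Hy. apply NNPP. intro Hne.
  destruct (weak_T1 x y (fun H => Hne (eq_sym H))) as [O [HO [Oy nOx]]].
  assert (HC : Defs.closed E W (fun z => ~ O z)).
  { intros z Hz. apply NNPP in Hz. destruct (HO z Hz) as [l [e [He K]]].
    exists l, e. split; [auto|]. intros w Hw Hn. apply Hn; auto. }
  destruct (Hreg _ y HC ltac:(tauto)) as [V1 [V2 [HV1 [HV2 [V1y [CV2 D12]]]]]].
  destruct (Hnet V1 y HV1 V1y) as [A [NA [Ay AV1]]].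
  destruct (proj1 (HN A) NA) as [n Nn].
  assert (clAy : cl A y) by (intros O' _ O'y; exists y; auto).
  destruct (Hy n A Nn clAy V2 HV2 (CV2 x nOx)) as [w [V2w Aw]].
  apply (D12 w); auto.
Qed.

Definition dzero : dual E openE.
Proof.
exists (fun _ => 0). split.
- split; intros; ring.
- intros x eps He. exists (fun _ => True). repeat split; auto.
  + destruct HE as [[H _] _]; exact H.
  + intros y _. rewrite Rminus_diag, Rabs_R0; auto.
Defined.

Lemma sep_seq : exists phi : nat -> dual E openE,
  forall x y, (forall k, proj1_sig (phi k) x = proj1_sig (phi k) y) -> x = y.
Proof.
destruct (pseudo 0v) as [On [HOn Hsep]].
assert (Hb : forall n, exists l : list (dual E openE), exists e, 0 < e /\
   forall y, (forall i, In i l -> Rabs (proj1_sig i y - proj1_sig i 0v) < e) -> On n y).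
{ intro n. destruct (HOn n) as [HW H0]. apply (HW 0v H0). }
set (L := fun n => proj1_sig (constructive_indefinite_description _ (Hb n))).
assert (HL : forall n, exists e, 0 < e /\
   forall y, (forall i, In i (L n) -> Rabs (proj1_sig i y - proj1_sig i 0v) < e) -> On n y).
{ intro n. unfold L. destruct (constructive_indefinite_description _ (Hb n)) as [l0 Hl0]. exact Hl0. }
exists (fun k => nth (snd (Cantor.of_nat k)) (L (fst (Cantor.of_nat k))) dzero).
intros x y Hk.
apply vsub_eq0. apply Hsep. intro n.
destruct (HL n) as [e [He K]]. apply K. intros i Hi.
destruct (In_nth _ _ dzero Hi) as [j [_ Hj]].
specialize (Hk (Cantor.to_nat (n, j))). rewrite Cantor.cancel_of_to in Hk. simpl in Hk.
rewrite Hj in Hk.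
assert (Hil := proj1 (proj2_sig i)).
rewrite linsub, lin0, Hk by auto. rewrite Rminus_diag, Rminus_diag, Rabs_R0. auto.
Qed.

End Pseudo.


Lemma Zpair_R (z : Z) : INR (Z.to_nat z) - INR (Z.to_nat (- z)) = IZR z.
Proof.
rewrite !INR_IZR_INZ. destruct (Z_le_gt_dec 0 z) as [H|H].
- rewrite (Z2Nat.id z H). replace (Z.to_nat (- z)) with 0%nat by lia. simpl. ring.
- rewrite (Z2Nat.id (- z)) by lia. replace (Z.to_nat z) with 0%nat by lia. rewrite opp_IZR. simpl. ring.
Qed.

Definition apx (v : R) (m : nat) : nat * nat :=
  let z := up (v * (INR m + 1)) in (Z.to_nat z, Z.to_nat (- z)).

Definition qv (p : nat * nat) (m : nat) : R := (INR (fst p) - INR (snd p)) / (INR m + 1).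

Lemma apx_spec v m : Rabs (qv (apx v m) m - v) <= / (INR m + 1).
Proof.
unfold qv, apx. simpl. rewrite Zpair_R.
destruct (archimed (v * (INR m + 1))) as [H1 H2].
assert (Hm : 0 < INR m + 1) by (generalize (pos_INR m); lra).
replace (IZR (up (v * (INR m + 1))) / (INR m + 1) - v) with
   ((IZR (up (v * (INR m + 1))) - v * (INR m + 1)) / (INR m + 1)) by (field; lra).
rewrite Rabs_pos_eq.
- unfold Rdiv. rewrite <- (Rmult_1_l (/ (INR m + 1))) at 2. apply Rmult_le_compat_r. apply Rlt_le, Rinv_0_lt_compat; auto. lra.
- apply Rmult_le_pos; [lra|apply Rlt_le, Rinv_0_lt_compat; auto].
Qed.

Lemma small_m c e : 0 < e -> exists m : nat, c / (INR m + 1) < e.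
Proof.
intros He. destruct (INR_archimed e c He) as [n Hn]. exists n.
assert (Hm : 0 < INR n + 1) by (generalize (pos_INR n); lra).
apply (Rmult_lt_reg_l (INR n + 1)); auto.
replace ((INR n + 1) * (c / (INR n + 1))) with c by (field; lra). lra.
Qed.

Lemma list_min_pos {I : Type} (Q : I -> R -> Prop) :
  (forall i t t', Q i t -> 0 < t' <= t -> Q i t') ->
  (forall i, exists t, 0 < t /\ Q i t) ->
  forall l, exists t, 0 < t /\ forall i, In i l -> Q i t.
Proof.
intros Hm Hex l. induction l as [|a l IH].
- exists 1. split; [lra|]. intros i [].
- destruct IH as [t [Ht Hl]]. destruct (Hex a) as [ta [Hta Ha]].
  exists (Rmin t ta). split; [apply Rmin_pos; auto|].
  assert (0 < Rmin t ta) by (apply Rmin_pos; auto).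
  intros i [<-|Hi].
  + apply Hm with ta; auto. split; auto. apply Rmin_r.
  + apply Hm with t; auto. split; auto. apply Rmin_l.
Qed.

Lemma real_sc r b eps : 0 < eps -> exists t, 0 < t /\
  forall s a, Rabs (s - r) < t -> Rabs (a - b) < t -> Rabs (s * a - r * b) < eps.
Proof.
intros He.
set (M := Rabs r + Rabs b + 1).
assert (HM : 0 < M) by (unfold M; generalize (Rabs_pos r) (Rabs_pos b); lra).
exists (Rmin 1 (eps / (2 * M))). split.
{ apply Rmin_pos; [lra|]. apply Rdiv_lt_0_compat; lra. }
intros s a Hs Ha.
assert (Ht1 := Rmin_l 1 (eps / (2 * M))). assert (Ht2 := Rmin_r 1 (eps / (2 * M))).
set (t := Rmin 1 (eps / (2 * M))) in *.
replace (s * a - r * b) with (s * (a - b) + (s - r) * b) by ring.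
eapply Rle_lt_trans; [apply Rabs_triang|]. rewrite !Rabs_mult.
assert (Hsr : Rabs s <= Rabs r + 1).
{ replace s with ((s - r) + r) by ring. eapply Rle_trans; [apply Rabs_triang|]. lra. }
assert (H1 : Rabs s * Rabs (a - b) <= (Rabs r + 1) * t).
{ apply Rmult_le_compat; auto using Rabs_pos; lra. }
assert (H2 : Rabs (s - r) * Rabs b <= t * Rabs b).
{ apply Rmult_le_compat_r; auto using Rabs_pos; lra. }
assert (H3 : t * M <= eps / 2).
{ apply Rle_trans with (eps / (2 * M) * M). apply Rmult_le_compat_r; lra.
  right. field. lra. }
unfold M in H3. nra.
Qed.

Lemma nth_map_seq {A : Type} (f : nat -> A) K i d : (i < K)%nat -> nth i (map f (seq 0 K)) d = f i.
Proof.
intro H. rewrite nth_indep with (d' := f 0%nat) by (rewrite length_map, length_seq; auto).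
rewrite map_nth, seq_nth; auto.
Qed.

Lemma in_list_max l i : In i l -> (i <= list_max l)%nat.
Proof.
intro H. assert (H2 := proj1 (list_max_le l (list_max l)) (le_n _)).
rewrite Forall_forall in H2. auto.
Qed.

Section Tau.
Variable E : vspace.
Notation "0v" := (vzero E).
Notation "x +v y" := (vadd E x y) (at level 50, left associativity).
Notation "a *v x" := (vscal E a x) (at level 40).
Variable phi : nat -> E -> R.
Hypothesis Hlin : forall k, Defs.linear E (phi k).
Hypothesis Hsep : forall x y, (forall k, phi k x = phi k y) -> x = y.

Definition tau := initial_open nat E phi.

Lemma tau_lc : lc_topology E tau.
Proof.
split; [apply iopen_top|]. split; [|split; [|split]].
- intros x y Hxy.
  assert (Hk : exists k, phi k x <> phi k y).
  { apply NNPP. intro Hn. apply Hxy. apply Hsep. intro k. apply NNPP. intro H. apply Hn. exists k; auto. }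
  destruct Hk as [k Hk].
  set (d := Rabs (phi k x - phi k y)).
  assert (Hd : 0 < d) by (apply Rabs_pos_lt; lra).
  exists (fun z => Rabs (phi k z - phi k x) < d / 2), (fun z => Rabs (phi k z - phi k y) < d / 2).
  repeat split; try apply iopen_ball.
  + rewrite Rminus_diag, Rabs_R0; lra.
  + rewrite Rminus_diag, Rabs_R0; lra.
  + intros z H1 H2. assert (Rabs (phi k x - phi k y) <= Rabs (phi k z - phi k x) + Rabs (phi k z - phi k y)).
    { replace (phi k x - phi k y) with (- (phi k z - phi k x) + (phi k z - phi k y)) by ring.
      eapply Rle_trans; [apply Rabs_triang|]. rewrite Rabs_Ropp. lra. }
    unfold d in *. lra.
- intros x y W HW Wxy. destruct (HW _ Wxy) as [l [e [He K]]].
  exists (fun a => forall i, In i l -> Rabs (phi i a - phi i x) < e / 2),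
         (fun b => forall i, In i l -> Rabs (phi i b - phi i y) < e / 2).
  repeat split; try apply iopen_box.
  + intros i _. rewrite Rminus_diag, Rabs_R0; lra.
  + intros i _. rewrite Rminus_diag, Rabs_R0; lra.
  + intros a b Ha Hb. apply K. intros i Hi.
    destruct (Hlin i) as [Hla _]. rewrite !Hla.
    replace (phi i a + phi i b - (phi i x + phi i y)) with ((phi i a - phi i x) + (phi i b - phi i y)) by ring.
    eapply Rle_lt_trans; [apply Rabs_triang|]. specialize (Ha i Hi). specialize (Hb i Hi). lra.
- intros r x W HW Wrx. destruct (HW _ Wrx) as [l [e [He K]]].
  destruct (list_min_pos (fun i t => forall s a, Rabs (s - r) < t -> Rabs (a - phi i x) < t ->
             Rabs (s * a - r * phi i x) < e)) with (l := l) as [t [Ht Hl]].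
  { intros i t t' H [H1 H2] s a Hs Ha. apply H; lra. }
  { intros i. apply real_sc; auto. }
  exists t, (fun y => forall i, In i l -> Rabs (phi i y - phi i x) < t).
  repeat split; auto; try apply iopen_box.
  + intros i _. rewrite Rminus_diag, Rabs_R0; lra.
  + intros s y Hs Hy. apply K. intros i Hi. destruct (Hlin i) as [_ Hls]. rewrite !Hls.
    apply Hl; auto.
- intros W HW W0. destruct (HW _ W0) as [l [e [He K]]].
  exists (fun y => forall i, In i l -> Rabs (phi i y - phi i 0v) < e).
  repeat split; auto; try apply iopen_box.
  + intros i _. rewrite Rminus_diag, Rabs_R0; lra.
  + intros x y t Ht Hx Hy i Hi. destruct (Hlin i) as [Hla Hls].
    specialize (Hx i Hi). specialize (Hy i Hi).
    rewrite Hla, !Hls. rewrite lin0 in * by auto. rewrite Rminus_0_r in *.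
    eapply Rle_lt_trans; [apply Rabs_triang|]. rewrite !Rabs_mult.
    rewrite (Rabs_pos_eq t), (Rabs_pos_eq (1 - t)) by lra.
    destruct (Req_dec t 0) as [H0|H0].
    * subst t. nra.
    * assert (t * Rabs (phi i x) < t * e) by (apply Rmult_lt_compat_l; lra).
      assert ((1 - t) * Rabs (phi i y) <= (1 - t) * e) by (apply Rmult_le_compat_l; lra).
      lra.
Qed.

Definition code_ok (c : nat * list (nat * nat)) (x : E) :=
  forall i, (i < length (snd c))%nat ->
    Rabs (phi i x - qv (nth i (snd c) (0%nat, 0%nat)) (fst c)) < 2 / (INR (fst c) + 1).

Definition myeps (P : E -> Prop) : E :=
  match excluded_middle_informative (exists x, P x) with
  | left H => proj1_sig (constructive_indefinite_description P H)
  | right _ => 0v end.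

Lemma myeps_spec (P : E -> Prop) : (exists x, P x) -> P (myeps P).
Proof.
intro H. unfold myeps. destruct (excluded_middle_informative _) as [H'|H'].
- apply (proj2_sig (constructive_indefinite_description P H')).
- contradiction.
Qed.

Lemma tau_separable : separable E tau.
Proof.
destruct Wrap.surj_A as [dec Hdec].
exists (fun n => myeps (code_ok (dec n))).
intros U HU [x Ux]. destruct (HU x Ux) as [l [e [He K]]].
destruct (small_m 4 e He) as [m Hm].
set (Kl := S (list_max l)).
set (c := (m, map (fun i => apx (phi i x) m) (seq 0 Kl))).
destruct (Hdec c) as [n Hn]. exists n.
assert (Hm1 : 0 < INR m + 1) by (generalize (pos_INR m); lra).
assert (Hc : code_ok c x).
{ intros i Hi. unfold c in *. cbn [fst snd] in *. rewrite length_map, length_seq in Hi.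
  rewrite nth_map_seq by auto.
  rewrite Rabs_minus_sym. eapply Rle_lt_trans; [apply apx_spec|].
  unfold Rdiv. rewrite <- (Rmult_1_l (/ (INR m + 1))) at 1. apply Rmult_lt_compat_r; [apply Rinv_0_lt_compat|]; lra. }
assert (Hd := myeps_spec (code_ok c) (ex_intro _ x Hc)).
rewrite Hn. apply K. intros i Hi.
assert (HiK : (i < Kl)%nat) by (unfold Kl; apply Nat.lt_succ_r, in_list_max; auto).
assert (Hlen : (i < length (snd c))%nat) by (unfold c; cbn [fst snd]; rewrite length_map, length_seq; auto).
specialize (Hd i Hlen). specialize (Hc i Hlen).
set (q := qv (nth i (snd c) (0%nat, 0%nat)) (fst c)) in *.
change (fst c) with m in Hd, Hc.
replace (phi i (myeps (code_ok c)) - phi i x) with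
  ((phi i (myeps (code_ok c)) - q) - (phi i x - q)) by ring.
eapply Rle_lt_trans; [apply Rabs_triang|]. rewrite Rabs_Ropp.
replace (4 / (INR m + 1)) with (2 / (INR m + 1) + 2 / (INR m + 1)) in Hm by (field; lra).
lra.
Qed.

Definition uk k x y := Rmin (/ (INR k + 1)) (Rabs (phi k x - phi k y)).

Lemma uk_bound k x y : uk k x y <= 1.
Proof.
unfold uk. eapply Rle_trans; [apply Rmin_l|].
assert (1 <= INR k + 1) by (generalize (pos_INR k); lra).
rewrite <- Rinv_1. apply Rinv_le_contravar; lra.
Qed.

Lemma uk_pos k x y : 0 <= uk k x y.
Proof. unfold uk. apply Rmin_glb; [apply Rlt_le, RinvN_pos|apply Rabs_pos]. Qed.

Definition dist (x y : E) : R.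
Proof.
refine (proj1_sig (completeness (fun v => exists k, v = uk k x y) _ _)).
- exists 1. intros v [k ->]. apply uk_bound.
- exists (uk 0 x y). exists 0%nat. auto.
Defined.

Lemma dist_lub x y : is_lub (fun v => exists k, v = uk k x y) (dist x y).
Proof. unfold dist. apply (proj2_sig (completeness _ _ _)). Qed.

Lemma dist_ge x y k : uk k x y <= dist x y.
Proof. apply (proj1 (dist_lub x y)). exists k; auto. Qed.

Lemma dist_le x y b : (forall k, uk k x y <= b) -> dist x y <= b.
Proof. intro H. apply (proj2 (dist_lub x y)). intros v [k ->]. auto. Qed.

Lemma uk_tri k x y z : uk k x z <= uk k x y + uk k y z.
Proof.
unfold uk. set (c := / (INR k + 1)).
assert (Hc : 0 < c) by apply RinvN_pos.
assert (T : Rabs (phi k x - phi k z) <= Rabs (phi k x - phi k y) + Rabs (phi k y - phi k z)).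
{ replace (phi k x - phi k z) with ((phi k x - phi k y) + (phi k y - phi k z)) by ring. apply Rabs_triang. }
generalize (Rabs_pos (phi k x - phi k y)) (Rabs_pos (phi k y - phi k z)).
unfold Rmin. repeat destruct Rle_dec; lra.
Qed.

Lemma uk_sym k x y : uk k x y = uk k y x.
Proof. unfold uk. rewrite Rabs_minus_sym. auto. Qed.

Lemma tau_metric : is_metric E dist.
Proof.
split; [|split].
- intros x y. split.
  + intro H. apply Hsep. intro k. assert (H1 := dist_ge x y k). rewrite H in H1.
    assert (H2 := uk_pos k x y). assert (Hu : uk k x y = 0) by lra.
    unfold uk in Hu. unfold Rmin in Hu. destruct Rle_dec.
    * exfalso. assert (Hc := RinvN_pos k). lra.
    * destruct (Req_dec (phi k x) (phi k y)) as [|Hne]; auto. exfalso. assert (Habs := Rabs_pos_lt (phi k x - phi k y) ltac:(lra)). lra.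
  + intros <-. apply Rle_antisym.
    * apply dist_le. intro k. unfold uk. rewrite Rminus_diag, Rabs_R0. apply Rmin_r.
    * eapply Rle_trans; [apply (uk_pos 0)|apply dist_ge].
- intros x y. apply Rle_antisym; apply dist_le; intro k; rewrite uk_sym; apply dist_ge.
- intros x y z. apply dist_le. intro k. eapply Rle_trans; [apply uk_tri|].
  apply Rplus_le_compat; apply dist_ge.
Qed.

Lemma tau_metrizable : metrizable E tau.
Proof.
exists dist. split; [apply tau_metric|]. intro U. split.
- intros HU x Ux. destruct (HU x Ux) as [l [e [He K]]].
  set (M := list_max l).
  exists (Rmin e (/ (INR M + 1))). split; [apply Rmin_pos; auto; apply RinvN_pos|].
  intros y Hy. apply K. intros i Hi.
  assert (H1 := dist_ge x y i).
  assert (Hle : / (INR M + 1) <= / (INR i + 1)).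
  { apply Rinv_le_contravar. generalize (pos_INR i); lra.
    apply Rplus_le_compat_r, le_INR, in_list_max; auto. }
  assert (H2 := Rmin_l e (/ (INR M + 1))). assert (H3 := Rmin_r e (/ (INR M + 1))).
  unfold uk in H1. unfold Rmin at 1 in H1. destruct Rle_dec in H1.
  + lra.
  + rewrite Rabs_minus_sym. lra.
- intros Hb x Ux. destruct (Hb x Ux) as [eps [Heps K]].
  destruct (small_m 1 (eps / 2)) as [m Hm]; [lra|].
  exists (seq 0 m), (eps / 2). split; [lra|].
  intros y Hy. apply K.
  assert (dist x y <= eps / 2).
  { apply dist_le. intro k. destruct (Nat.lt_ge_cases k m) as [Hk|Hk].
    - unfold uk. eapply Rle_trans; [apply Rmin_r|]. rewrite Rabs_minus_sym.
      left. apply Hy. apply in_seq. lia.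
    - unfold uk. eapply Rle_trans; [apply Rmin_l|]. left. eapply Rle_lt_trans; [|apply Hm].
      unfold Rdiv. rewrite Rmult_1_l. apply Rinv_le_contravar. generalize (pos_INR m); lra.
      apply Rplus_le_compat_r, le_INR; auto. }
  lra.
Qed.

End Tau.


Section Dual.
Variable E : vspace.
Variable openE : (E -> Prop) -> Prop.
Hypothesis HE : lc_topology E openE.
Notation "0v" := (vzero E).
Notation "x +v y" := (vadd E x y) (at level 50, left associativity).
Notation "a *v x" := (vscal E a x) (at level 40).
Variable phi : nat -> dual E openE.
Hypothesis Hsep : forall x y, (forall k, proj1_sig (phi k) x = proj1_sig (phi k) y) -> x = y.

Definition ph k x := proj1_sig (phi k) x.
Lemma ph_lin k : Defs.linear E (ph k).
Proof. exact (proj1 (proj2_sig (phi k))). Qed.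
Lemma ph_cont k : Defs.continuous E openE (ph k).
Proof. exact (proj2 (proj2_sig (phi k))). Qed.

Fixpoint ev (hs : list (R * nat)) (x : E) : R :=
  match hs with nil => 0 | p :: hs => fst p * ph (snd p) x + ev hs x end.

Lemma ev_lin hs : Defs.linear E (ev hs).
Proof.
induction hs as [|p hs IH]; split; intros; simpl.
- ring.
- ring.
- destruct IH as [Ha _]. destruct (ph_lin (snd p)) as [Ha' _]. rewrite Ha, Ha'. ring.
- destruct IH as [_ Hs]. destruct (ph_lin (snd p)) as [_ Hs']. rewrite Hs, Hs'. ring.
Qed.

Lemma cont_comb c f g : Defs.continuous E openE f -> Defs.continuous E openE g ->
  Defs.continuous E openE (fun x => c * f x + g x).
Proof.
intros Hf Hg x eps He.
set (d := eps / (2 * (Rabs c + 1))).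
assert (Hc : 0 < Rabs c + 1) by (generalize (Rabs_pos c); lra).
assert (Hd : 0 < d) by (apply Rdiv_lt_0_compat; lra).
destruct (Hf x d Hd) as [U1 [HU1 [U1x K1]]].
destruct (Hg x (eps / 2) ltac:(lra)) as [U2 [HU2 [U2x K2]]].
exists (fun y => U1 y /\ U2 y). repeat split; auto.
- destruct HE as [[_ [H _]] _]. apply H; auto.
- intros y [Hy1 Hy2]. specialize (K1 y Hy1). specialize (K2 y Hy2).
  replace (c * f y + g y - (c * f x + g x)) with (c * (f y - f x) + (g y - g x)) by ring.
  eapply Rle_lt_trans; [apply Rabs_triang|]. rewrite Rabs_mult.
  assert (Rabs c * Rabs (f y - f x) <= Rabs c * d) by (apply Rmult_le_compat_l; auto using Rabs_pos; lra).
  assert (Rabs c * d <= eps / 2).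
  { unfold d. apply Rle_trans with ((Rabs c + 1) * (eps / (2 * (Rabs c + 1)))).
    - apply Rmult_le_compat_r; [apply Rlt_le; auto|lra].
    - right. field. lra. }
  lra.
Qed.

Lemma ev_cont hs : Defs.continuous E openE (ev hs).
Proof.
induction hs as [|p hs IH].
- intros x eps He. exists (fun _ => True). repeat split; auto.
  + destruct HE as [[H _] _]; exact H.
  + intros y _. simpl. rewrite Rminus_diag, Rabs_R0; auto.
- simpl. apply (cont_comb (fst p) (ph (snd p)) (ev hs)); auto. apply ph_cont.
Qed.

Definition ev_dual (hs : list (R * nat)) : dual E openE :=
  exist _ (ev hs) (conj (ev_lin hs) (ev_cont hs)).

Lemma ev_app h1 h2 x : ev (h1 ++ h2) x = ev h1 x + ev h2 x.
Proof. induction h1 as [|p h1 IH]; simpl; [ring|rewrite IH; ring]. Qed.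

Definition hscale (a : R) (hs : list (R * nat)) := map (fun p => (a * fst p, snd p)) hs.

Lemma ev_scale a hs x : ev (hscale a hs) x = a * ev hs x.
Proof. induction hs as [|p hs IH]; simpl; [ring|rewrite IH; ring]. Qed.

Fixpoint spanv (l : list E) (x : E) : Prop :=
  match l with nil => x = 0v | y :: l => exists c, spanv l (x +v (- c) *v y) end.

Lemma lin_span F G l : Defs.linear E F -> Defs.linear E G ->
  (forall y, In y l -> F y = G y) -> forall x, spanv l x -> F x = G x.
Proof.
intros [Fa Fs] [Ga Gs]. induction l as [|y l IH]; intros Hl x Hx; simpl in Hx.
- subst x. rewrite <- (vscal0 E 0v), Fs, Gs. ring.
- destruct Hx as [c Hc]. assert (H := IH (fun z Hz => Hl z (or_intror Hz)) _ Hc).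
  rewrite Fa, Ga, Fs, Gs, (Hl y (or_introl eq_refl)) in H. lra.
Qed.

Lemma Q_lemma l : forall x, spanv l x \/
  exists hs, (forall y, In y l -> ev hs y = 0) /\ ev hs x = 1.
Proof.
induction l as [|y l IH]; intros x.
- destruct (classic (x = 0v)) as [H|H]; [left; auto|right].
  assert (Hk : exists k, ph k x <> 0).
  { apply NNPP. intro Hn. apply H. apply Hsep. intro k. fold (ph k x) (ph k 0v).
    rewrite lin0 by apply ph_lin. apply NNPP. intro H'. apply Hn. exists k; auto. }
  destruct Hk as [k Hk]. exists ((/ ph k x, k) :: nil). split.
  + intros y [].
  + simpl. field. auto.
- destruct (IH y) as [Hy|[k [Hk0 Hk1]]].
  + destruct (IH x) as [Hx|[h [Hh0 Hh1]]].
    * left. exists 0. rewrite Ropp_0, vscal0, vadd0. auto.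
    * right. exists h. split; auto. intros z [<-|Hz]; auto.
      apply (lin_span (ev h) (fun _ => 0) l (ev_lin h)); auto. split; intros; ring.
  + set (u := x +v (- ev k x) *v y).
    destruct (IH u) as [Hu|[h [Hh0 Hh1]]].
    * left. exists (ev k x). exact Hu.
    * right. exists (h ++ hscale (- ev h y) k). split.
      -- intros z [<-|Hz]; rewrite ev_app, ev_scale.
         ++ rewrite Hk1. ring.
         ++ rewrite Hh0, Hk0 by auto. ring.
      -- rewrite ev_app, ev_scale. unfold u in Hh1. destruct (ev_lin h) as [Ha Hs].
         rewrite Ha, Hs in Hh1. lra.
Qed.

Lemma P_lemma (g : E -> R) : Defs.linear E g -> forall l,
  exists hs, forall x, In x l -> ev hs x = g x.
Proof.
intros Hg l. induction l as [|x l IH].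
- exists nil. intros x [].
- destruct IH as [hs Hhs]. destruct (Q_lemma l x) as [Hx|[h [Hh0 Hh1]]].
  + exists hs. intros z [<-|Hz]; auto. apply (lin_span (ev hs) g l (ev_lin hs) Hg); auto.
  + exists (hs ++ hscale (g x - ev hs x) h). intros z [<-|Hz]; rewrite ev_app, ev_scale.
    * rewrite Hh1. ring.
    * rewrite Hh0, Hhs by auto. ring.
Qed.

Definition hrat (m : nat) (hs : list (R * nat)) := map (fun p => (qv (apx (fst p) m) m, snd p)) hs.

Fixpoint absum (hs : list (R * nat)) (x : E) : R :=
  match hs with nil => 0 | p :: hs => Rabs (ph (snd p) x) + absum hs x end.

Lemma absum_pos hs x : 0 <= absum hs x.
Proof. induction hs; simpl; [lra|generalize (Rabs_pos (ph (snd a) x)); lra]. Qed.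

Lemma hrat_err m hs x : Rabs (ev hs x - ev (hrat m hs) x) <= / (INR m + 1) * absum hs x.
Proof.
induction hs as [|p hs IH]; simpl.
- rewrite Rminus_diag, Rabs_R0. lra.
- replace (fst p * ph (snd p) x + ev hs x - (qv (apx (fst p) m) m * ph (snd p) x + ev (hrat m hs) x))
    with ((fst p - qv (apx (fst p) m) m) * ph (snd p) x + (ev hs x - ev (hrat m hs) x)) by ring.
  eapply Rle_trans; [apply Rabs_triang|]. rewrite Rabs_mult.
  assert (H1 := apx_spec (fst p) m). rewrite Rabs_minus_sym in H1.
  assert (Rabs (fst p - qv (apx (fst p) m) m) * Rabs (ph (snd p) x) <= / (INR m + 1) * Rabs (ph (snd p) x))
    by (apply Rmult_le_compat_r; auto using Rabs_pos).
  lra.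
Qed.

Fixpoint bigM (hs : list (R * nat)) (l : list E) : R :=
  match l with nil => 0 | x :: l => absum hs x + bigM hs l end.

Lemma bigM_ge hs l x : In x l -> absum hs x <= bigM hs l.
Proof.
induction l as [|y l IH]; simpl; intros H; [destruct H|].
assert (0 <= bigM hs l) by (clear; induction l; simpl; [lra|generalize (absum_pos hs a); lra]).
destruct H as [<-|H].
- generalize (absum_pos hs y). lra.
- generalize (absum_pos hs y) (IH H). lra.
Qed.

Definition hdec (c : nat * list (nat * nat * nat)) : list (R * nat) :=
  map (fun t => (qv (fst (fst t), snd (fst t)) (fst c), snd t)) (snd c).

Lemma weakstar_sep : separable (dual E openE) (weakstar_open E openE).
Proof.
destruct Wrap.surj_B as [dec Hdec].
exists (fun n => ev_dual (hdec (dec n))).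
intros W HW [g Wg]. destruct (HW g Wg) as [l [e [He K]]].
destruct (P_lemma (proj1_sig g) (proj1 (proj2_sig g)) l) as [hs Hhs].
destruct (small_m (bigM hs l) e He) as [m Hm].
set (c := (m, map (fun p => (fst (apx (fst p) m), snd (apx (fst p) m), snd p)) hs)).
destruct (Hdec c) as [n Hn]. exists n. rewrite Hn.
assert (Hc : hdec c = hrat m hs).
{ unfold hdec, hrat, c. cbn [fst snd]. rewrite map_map. apply map_ext. intros p. cbn [fst snd].
  rewrite <- surjective_pairing. auto. }
apply K. intros x Hx. simpl. rewrite Hc. rewrite <- (Hhs x Hx).
rewrite Rabs_minus_sym. eapply Rle_lt_trans; [apply hrat_err|].
assert (Hm1 : 0 < INR m + 1) by (generalize (pos_INR m); lra).
eapply Rle_lt_trans; [|apply Hm].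
unfold Rdiv. rewrite (Rmult_comm (bigM hs l)). apply Rmult_le_compat_l.
- apply Rlt_le, Rinv_0_lt_compat; auto.
- apply bigM_ge; auto.
Qed.

End Dual.


Lemma least_ex (P : nat -> Prop) : (exists n, P n) -> exists m, P m /\ forall k, (k < m)%nat -> ~ P k.
Proof.
intros [n Hn]. induction n as [n IH] using (well_founded_induction lt_wf).
destruct (classic (exists k, (k < n)%nat /\ P k)) as [[k [Hk Pk]]|H].
- apply (IH k Hk Pk).
- exists n. split; auto. intros k Hk Pk. apply H. exists k; auto.
Qed.

Definition w3 (k : nat) := (/ 3) ^ k.

Fixpoint psum (s : nat -> bool) (n : nat) : R :=
  match n with O => 0 | S n => psum s n + (if s n then w3 n else 0) end.

Lemma w3_pos k : 0 < w3 k.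
Proof. unfold w3. apply pow_lt. lra. Qed.

Lemma w3_S k : w3 (S k) = w3 k / 3.
Proof. unfold w3. simpl. field. Qed.

Lemma psum_bound s n : psum s n <= 3 / 2 - 3 / 2 * w3 n.
Proof.
induction n as [|n IH]; simpl.
- unfold w3. simpl. lra.
- rewrite w3_S. assert (H := w3_pos n). destruct (s n); lra.
Qed.

Lemma psum_mono s n j : psum s n <= psum s (n + j)%nat.
Proof.
induction j as [|j IH].
- rewrite Nat.add_0_r. lra.
- rewrite Nat.add_succ_r. simpl. assert (H := w3_pos (n + j)%nat). destruct (s (n + j)%nat); lra.
Qed.

Lemma psum_S s n : psum s (S n) = psum s n + (if s n then w3 n else 0).
Proof. reflexivity. Qed.

Lemma psum_tail s m j : psum s (S m + j)%nat <= psum s (S m) + w3 m / 2 - w3 (m + j)%nat / 2.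
Proof.
induction j as [|j IH].
- rewrite !Nat.add_0_r. lra.
- replace (S m + S j)%nat with (S (S m + j)) by lia. rewrite psum_S.
  replace (S m + j)%nat with (S (m + j)) in * by lia.
  replace (m + S j)%nat with (S (m + j)) by lia.
  rewrite w3_S. assert (H := w3_pos (m + j)%nat).
  destruct (s (S (m + j))); lra.
Qed.

Lemma psum_agree s t n : (forall k, (k < n)%nat -> s k = t k) -> psum s n = psum t n.
Proof.
induction n as [|n IH]; intros H; simpl; auto.
rewrite IH by (intros; apply H; lia). rewrite H by lia. auto.
Qed.

Definition b2r (s : nat -> bool) : R.
Proof.
refine (proj1_sig (completeness (fun v => exists n, v = psum s n) _ _)).
- exists (3 / 2). intros v [n ->]. generalize (psum_bound s n) (w3_pos n). lra.
- exists 0, 0%nat. auto.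
Defined.

Lemma b2r_lub s : is_lub (fun v => exists n, v = psum s n) (b2r s).
Proof. unfold b2r. apply (proj2_sig (completeness _ _ _)). Qed.

Lemma b2r_lt s t m : (forall k, (k < m)%nat -> s k = t k) -> s m = true -> t m = false ->
  b2r t < b2r s.
Proof.
intros Hag Hs Ht.
assert (HP : psum s m = psum t m) by (apply psum_agree; auto).
assert (H1 : psum s (S m) <= b2r s) by (apply (proj1 (b2r_lub s)); exists (S m); auto).
assert (H2 : b2r t <= psum t m + w3 m / 2).
{ apply (proj2 (b2r_lub t)). intros v [n ->].
  destruct (Nat.le_gt_cases n m) as [Hn|Hn].
  - replace m with (n + (m - n))%nat by lia. generalize (psum_mono t n (m - n)%nat) (w3_pos (n + (m - n))%nat). lra.
  - replace n with (S m + (n - S m))%nat by lia.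
    generalize (psum_tail t m (n - S m)%nat) (w3_pos (m + (n - S m))%nat).
    simpl psum at 2. rewrite Ht. lra. }
simpl in H1. rewrite Hs in H1. assert (H := w3_pos m). lra.
Qed.

Lemma b2r_inj s t : b2r s = b2r t -> s = t.
Proof.
intro H. apply NNPP. intro Hne.
assert (Hex : exists n, s n <> t n).
{ apply NNPP. intro Hn. apply Hne. apply functional_extensionality. intro n.
  apply NNPP. intro H'. apply Hn. exists n; auto. }
destruct (least_ex _ Hex) as [m [Hm Hlt]].
assert (Hag : forall k, (k < m)%nat -> s k = t k) by (intros k Hk; apply NNPP; apply Hlt; auto).
destruct (s m) eqn:Es; destruct (t m) eqn:Et; try congruence.
- assert (b2r t < b2r s) by (apply (b2r_lt s t m); auto). lra.
- assert (b2r s < b2r t) by (apply (b2r_lt t s m); auto; intros; symmetry; auto). lra.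
Qed.

Definition r2b (dq : nat -> nat * nat * nat) (r : R) : nat -> bool :=
  fun n => if Rlt_dec (qv (fst (fst (dq n)), snd (fst (dq n))) (snd (dq n))) r then true else false.

Lemma r2b_inj dq : (forall t, exists n, dq n = t) -> forall r s, r2b dq r = r2b dq s -> r = s.
Proof.
intros Hdq.
assert (Hlt : forall r s, r < s -> r2b dq r <> r2b dq s).
{ intros r s Hrs Heq.
  destruct (small_m 2 (s - r)) as [m Hm]; [lra|].
  set (v := (r + s) / 2).
  set (p := apx v m).
  destruct (Hdq (fst p, snd p, m)) as [n Hn].
  assert (Ha := apx_spec v m). fold p in Ha.
  assert (Hm1 : 0 < INR m + 1) by (generalize (pos_INR m); lra).
  assert (Hq : / (INR m + 1) < (s - r) / 2).
  { replace (/ (INR m + 1)) with ((2 / (INR m + 1)) / 2) by (field; lra). lra. }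
  assert (Ha1 := Rle_abs (qv p m - v)). assert (Ha2 := Rle_abs (-(qv p m - v))). rewrite Rabs_Ropp in Ha2.
  assert (E1 := f_equal (fun f => f n) Heq). cbv beta in E1. unfold r2b in E1. rewrite Hn in E1. cbn [fst snd] in E1.
  rewrite <- surjective_pairing in E1.
  destruct (Rlt_dec (qv p m) r); destruct (Rlt_dec (qv p m) s); try discriminate; unfold v in *; lra. }
intros r s H. destruct (Rtotal_order r s) as [H1|[H1|H1]]; auto.
- exfalso. apply (Hlt r s H1 H).
- exfalso. apply (Hlt s r H1). auto.
Qed.

Definition pairb (S : nat -> nat -> bool) : nat -> bool :=
  fun n => S (fst (of_nat n)) (snd (of_nat n)).

Lemma pairb_inj S1 S2 : pairb S1 = pairb S2 -> S1 = S2.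
Proof.
intro H. apply functional_extensionality. intro i. apply functional_extensionality. intro j.
assert (E1 := f_equal (fun f => f (to_nat (i, j))) H). cbv beta in E1. unfold pairb in E1.
assert (Hc := cancel_of_to (i, j)). rewrite Hc in E1. exact E1.
Qed.

Lemma card_c (E : vspace) (phi : nat -> E -> R)
  (Hsep : forall x y, (forall k, phi k x = phi k y) -> x = y)
  (x0 : E) (Hx0 : x0 <> vzero E) :
  exists f : E -> R, (forall x y, f x = f y -> x = y) /\ (forall r, exists x, f x = r).
Proof.
destruct Wrap.surj_C as [dq Hdq].
apply (Wrap.cb_wrap E (fun x => b2r (pairb (fun k => r2b dq (phi k x)))) (fun t => vscal E t x0)).
- intros x y H. apply b2r_inj, pairb_inj in H. apply Hsep. intro k.
  apply (r2b_inj dq Hdq). apply (f_equal (fun f => f k) H).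
- intros t s H. apply NNPP. intro Hts. apply Hx0.
  assert (H2 : vscal E (t - s) x0 = vzero E).
  { unfold Rminus. rewrite vscalDl, H, <- vscalDl. replace (s + - s) with 0 by ring. apply vscal0. }
  apply (vscal_inj E (t - s)); [lra|]. rewrite H2, vscalz. auto.
Qed.


Theorem proposition3p4 (E : vspace) (openE : (E -> Prop) -> Prop)
  (HE : lc_topology E openE)
  (Hnontriv : exists x : E, x <> vzero E)
  (Hsig : sigma_space E (weak_open E openE)) :
  (* (i) a weaker separable metrizable locally convex topology *)
  (exists tau : (E -> Prop) -> Prop,
     lc_topology E tau /\
     (forall U, tau U -> weak_open E openE U) /\
     separable E tau /\ metrizable E tau) /\
  (* (ii) countable pseudocharacter and |E| = c *)
  (countable_pseudocharacter E (weak_open E openE) /\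
   exists f : E -> R, (forall x y, f x = f y -> x = y) /\
                      (forall r, exists x, f x = r)) /\
  (* (iii) (E', sigma(E',E)) is separable *)
  separable (dual E openE) (weakstar_open E openE).
Proof.
destruct (sep_seq E openE HE Hsig) as [phi Hphi].
set (ph' := fun k x => proj1_sig (phi k) x).
assert (Hlin : forall k, Defs.linear E (ph' k)) by (intro k; exact (proj1 (proj2_sig (phi k)))).
split; [|split; [split|]].
- exists (tau E ph'). split; [apply tau_lc; auto|]. split; [|split].
  + intros U HU x Ux. destruct (HU x Ux) as [l [e [He K]]].
    exists (map phi l), e. split; auto. intros y Hy. apply K. intros i Hi.
    apply (Hy (phi i)). apply in_map; auto.
  + apply tau_separable; auto.
  + apply tau_metrizable; auto.
- intro x. apply (pseudo E openE HE Hsig x).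
- destruct Hnontriv as [x0 Hx0]. apply (card_c E ph' Hphi x0 Hx0).
- apply (weakstar_sep E openE HE phi Hphi).
Qed.
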